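(* Let $R,R'\subseteq S_n$ be the top-$l$ and top-$m$ partial rankings $R: a_1\succ\cdots\succ a_l\succ[n]\setminus\{a_1,\dots,a_l\}$ and $R': b_1\succ\cdots\succ b_m\succ[n]\setminus\{b_1,\dots,b_m\}$. Let $\{b_{i_1},\dots,b_{i_q}\}=\{b_1,\dots,b_m\}\setminus\{a_1,\dots,a_l\}$ with $i_1<\cdots<i_q$, and let $R''\subseteq R$ be the top-$(l+q)$ partial ranking $a_1\succ\cdots\succ a_l\succ b_{i_1}\succ\cdots\succ b_{i_q}\succ[n]\setminus\{a_1,\dots,a_l,b_1,\dots,b_m\}$. If $\tau$ is uniformly distributed on $R'$, then $\Pi_R(\tau)$ is uniformly distributed on $R''$.
   Context: $S_n$ is the symmetric group on $[n]$; $\sigma\in S_n$ is identified with the full ranking $\sigma(1)\succ\cdots\succ\sigma(n)$. For distinct items $x,y$, $\{x,y\}$ is discordant for $\sigma,\tau$ if $(\sigma^{-1}(x)-\sigma^{-1}(y))(\tau^{-1}(x)-\tau^{-1}(y))<0$. The Kendall distance $d(\sigma,\tau)$ is the number of unordered discordant pairs. For $0\le k\le n$ and distinct $c_1,\dots,c_k\in[n]$, the top-$k$ partial ranking $c_1\succ\cdots\succ c_k\succ[n]\setminus\{c_1,\dots,c_k\}$ is the set $\{\sigma\in S_n:\sigma(i)=c_i,\ i\le k\}$. For $\tau\in S_n$, $\Pi_R(\tau)$ denotes the unique element of $R$ minimising $\rho\mapsto d(\rho,\tau)$ over $\rho\in R$. *)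

(* Defs.v *)
From HB Require Import structures.
From mathcomp Require Import all_boot all_order all_algebra all_fingroup.
Set Implicit Arguments. Unset Strict Implicit. Unset Printing Implicit Defensive.
Import Order.TTheory GRing.Theory Num.Theory.

(* Items [n] are 'I_n (0-indexed); positions are also 'I_n (0-indexed).
   sigma : 'S_n maps a position i to the item sigma i ranked at that position,
   so sigma^-1 x is the position of item x. *)

Definition discordant n (sigma tau : 'S_n) (x y : 'I_n) : bool :=
  (x != y) &&
  (((((sigma^-1)%g x : nat)%:Z - ((sigma^-1)%g y : nat)%:Z) *
    (((tau^-1)%g x : nat)%:Z - ((tau^-1)%g y : nat)%:Z) < 0)%R).

Definition kendall n (sigma tau : 'S_n) : nat :=
  #|[set xy : 'I_n * 'I_n | (xy.1 < xy.2) && discordant sigma tau xy.1 xy.2]|.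

Definition topk n (c : seq 'I_n) : {set 'S_n} :=
  [set sigma : 'S_n | [forall i : 'I_n, (i < size c) ==> (sigma i == nth i c i)]].

(* Pi_R(tau): the (unique, per the paper) minimiser of rho |-> d(rho,tau) over R;
   chosen among the minimisers, default tau if R is empty. *)
Definition proj n (R : {set 'S_n}) (tau : 'S_n) : 'S_n :=
  odflt tau [pick rho in R |
    [forall rho' in R, kendall rho tau <= kendall rho' tau]].

(* Main.v *)
Require Import Defs.
From HB Require Import structures.
From mathcomp Require Import all_boot all_order all_algebra all_fingroup.
From mathcomp Require Import zify.
Set Implicit Arguments. Unset Strict Implicit. Unset Printing Implicit Defensive.

Local Open Scope nat_scope.

Definition pos n (s : 'S_n) (x : 'I_n) : nat := nat_of_ord ((s^-1)%g x).

Lemma card_lt_ord n v : v <= n -> #|[set p : 'I_n | p < v]| = v.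
Proof.
move=> vn.
have -> : [set p : 'I_n | p < v] = (widen_ord vn) @: [set: 'I_v].
  apply/setP => p; rewrite inE; apply/idP/imsetP.
    by move=> pv; exists (Ordinal pv) => //; apply/val_inj.
  by case=> q _ ->; rewrite /= ltn_ord.
rewrite card_imset ?cardsT ?card_ord //.
by move=> i j /(congr1 val) /= ij; apply/val_inj.
Qed.

Lemma rank n (s : 'S_n) x : #|[set y | pos s y < pos s x]| = pos s x.
Proof.
have -> : [set y | pos s y < pos s x] = s @: [set p : 'I_n | p < pos s x].
  apply/setP => y; rewrite inE; apply/idP/imsetP.
    by move=> H; exists ((s^-1)%g y); rewrite ?inE ?permKV.
  by case=> p; rewrite inE => Hp ->; rewrite /pos permK.
rewrite card_imset; last exact: perm_inj.
rewrite card_lt_ord //; exact: (ltnW (ltn_ord _)).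
Qed.

Lemma pos_inj n (s : 'S_n) : injective (pos s).
Proof. by move=> x y /val_inj /perm_inj. Qed.

Lemma lt_perm_eq n (s t : 'S_n) :
  (forall x y, (pos s x < pos s y) = (pos t x < pos t y)) -> s = t.
Proof.
move=> H.
have E : forall x, pos s x = pos t x.
  move=> x; rewrite -rank -[RHS]rank; apply: eq_card => y.
  by rewrite !inE H.
have : (s^-1)%g = (t^-1)%g by apply/permP => x; apply/val_inj; exact: E.
exact: invg_inj.
Qed.

Lemma lt_total n (s : 'S_n) x y : x != y ->
  (pos s x < pos s y) = ~~ (pos s y < pos s x).
Proof.
move=> xy; have : pos s x != pos s y.
  by apply/contra: xy => /eqP /pos_inj ->.
lia.
Qed.

Lemma size_le n (c : seq 'I_n) : uniq c -> size c <= n.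
Proof. move=> u; rewrite -(card_uniqP u); apply: leq_trans (max_card _) _; by rewrite card_ord. Qed.

Lemma topk_inv n (c : seq 'I_n) (s : 'S_n) : uniq c ->
  (s \in topk c) <-> {in c, forall x, pos s x = index x c}.
Proof.
move=> u; split.
  rewrite inE => /forallP H x xc.
  have ix : index x c < n by apply: leq_trans (size_le u); rewrite index_mem.
  have := H (Ordinal ix); rewrite /= index_mem xc /= nth_index // => /eqP E.
  by rewrite /pos -{1}E permK.
move=> H; rewrite inE; apply/forallP => i; apply/implyP => ic.
have xc : nth i c i \in c by apply: mem_nth.
have := H _ xc; rewrite index_uniq // => E.
have E2 : i = (s^-1)%g (nth i c i) by apply/val_inj; exact: (esym E).
by rewrite {1}E2 permKV.
Qed.

Lemma topk_lt n (c : seq 'I_n) (s : 'S_n) x y : uniq c -> s \in topk c ->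
  x \in c -> (pos s x < pos s y) = (y \notin c) || (index x c < index y c).
Proof.
move=> u sc xc; have H := (topk_inv s u).1 sc.
rewrite H //; case yc: (y \in c); first by rewrite H.
rewrite /=; apply: (leq_trans _ (_ : size c <= pos s y)); first by rewrite index_mem.
rewrite leqNgt; apply/negP => ly.
move: sc; rewrite inE => /forallP /(_ ((s^-1)%g y)); rewrite ly /= permKV => /eqP E.
by move: yc; rewrite E mem_nth.
Qed.

Lemma topk_lt' n (c : seq 'I_n) (s : 'S_n) x y : uniq c -> s \in topk c ->
  x \in c -> (pos s y < pos s x) = (y \in c) && (index y c < index x c).
Proof.
move=> u sc xc; case yc: (y \in c) => /=.
  by rewrite (topk_lt _ u sc yc) xc.
have xy : y != x by apply/contraFneq: yc => ->.
by rewrite lt_total // (topk_lt _ u sc xc) yc.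
Qed.

Lemma disc_lt n (s t : 'S_n) x y : discordant s t x y =
  (x != y) && ((pos s x < pos s y) != (pos t x < pos t y)).
Proof.
rewrite /discordant; case: eqVneq => //= xy.
have h1 : pos s x != pos s y by apply/contra: xy => /eqP /pos_inj ->.
have h2 : pos t x != pos t y by apply/contra: xy => /eqP /pos_inj ->.
rewrite -/(pos s x) -/(pos s y) -/(pos t x) -/(pos t y).
move: h1 h2; set p1 := pos s x; set p2 := pos s y; set q1 := pos t x; set q2 := pos t y.
move=> h1 h2.
case: (ltngtP p1 p2) => H1; case: (ltngtP q1 q2) => H2 //=;
  try (by move: h1; rewrite H1 eqxx); try (by move: h2; rewrite H2 eqxx).
all: apply/idP/idP => //=; nia.
Qed.

Lemma index_filter (T : eqType) (p : pred T) (s : seq T) x y :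
  x \in filter p s -> y \in filter p s ->
  (index x (filter p s) < index y (filter p s)) = (index x s < index y s).
Proof.
elim: s => //= z s IH; case pz: (p z) => /=.
  rewrite !inE; case: (eqVneq z x) => [<-|zx]; case: (eqVneq z y) => [<-|zy] //=.
move=> xs ys; have zx : z != x by apply/contraFneq: pz => ->; move: xs; rewrite mem_filter => /andP[].
have zy : z != y by apply/contraFneq: pz => ->; move: ys; rewrite mem_filter => /andP[].
by rewrite (negbTE zx) (negbTE zy) ltnS IH.
Qed.

Definition P n (a : seq 'I_n) (rho tau : 'S_n) : Prop :=
  rho \in topk a /\ forall x y, x \notin a -> y \notin a ->
    (pos rho x < pos rho y) = (pos tau x < pos tau y).

Lemma P_uniq n (a : seq 'I_n) r1 r2 tau : uniq a -> P a r1 tau -> P a r2 tau -> r1 = r2.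
Proof.
move=> u [h1 H1] [h2 H2]; apply: lt_perm_eq => x y.
case xa: (x \in a); first by rewrite !(topk_lt _ u _ xa).
case ya: (y \in a); last by rewrite H1 ?xa ?ya // H2 ?xa ?ya.
have xy : x != y by apply/contraFneq: xa => ->.
by rewrite !(lt_total _ xy) !(topk_lt _ u _ ya) ?xa.
Qed.

Definition Sx n (a : seq 'I_n) (tau : 'S_n) x :=
  [set y | (y \notin a) && (pos tau y < pos tau x)].

Lemma Sx_mono n (a : seq 'I_n) tau x y : x \notin a -> pos tau x < pos tau y ->
  #|Sx a tau x| < #|Sx a tau y|.
Proof.
move=> xa xy; apply: proper_card; apply/properP; split.
  apply/subsetP => z; rewrite !inE => /andP[-> /= zx]; exact: ltn_trans zx xy.
by exists x; rewrite !inE ?xa ?xy ?ltnn.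
Qed.

Lemma Sx_lt n (a : seq 'I_n) tau x : uniq a -> x \notin a -> size a + #|Sx a tau x| < n.
Proof.
move=> u xa.
have C : size a + #|[set y | y \notin a]| = n.
  have E := cardC (mem a); rewrite card_ord (card_uniqP u) in E.
  apply: etrans E; congr (_ + _); apply: eq_card => y; by rewrite !inE.
have : #|Sx a tau x| < #|[set y | y \notin a]|.
  apply: proper_card; apply/properP; split.
    by apply/subsetP => z; rewrite !inE => /andP[].
  by exists x; rewrite !inE ?xa ?ltnn.
move: C; lia.
Qed.

Definition gfun n (a : seq 'I_n) (tau : 'S_n) x : nat :=
  if x \in a then index x a else size a + #|Sx a tau x|.

Lemma gfun_lt n (a : seq 'I_n) tau x : uniq a -> gfun a tau x < n.
Proof.
move=> u; rewrite /gfun; case: ifP => xa; last by rewrite Sx_lt ?xa.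
by apply: leq_trans (size_le u); rewrite index_mem.
Qed.

Lemma gfun_P n (a : seq 'I_n) tau x y : x \notin a -> y \notin a ->
  (gfun a tau x < gfun a tau y) = (pos tau x < pos tau y).
Proof.
move=> xa ya; rewrite /gfun (negbTE xa) (negbTE ya) ltn_add2l.
case: (ltngtP (pos tau x) (pos tau y)) => H.
- exact: Sx_mono.
- by apply/negbTE; rewrite -leqNgt ltnW // Sx_mono.
- by rewrite (pos_inj H) ltnn.
Qed.

Lemma exists_P n (a : seq 'I_n) tau : uniq a -> exists rho, P a rho tau.
Proof.
move=> u.
pose gg := fun x => Ordinal (gfun_lt tau x u).
have ginj : injective gg.
  move=> x y /(congr1 val) /=; rewrite /gfun.
  case xa: (x \in a); case ya: (y \in a).
  - by move=> E; rewrite -(nth_index x xa) E nth_index.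
  - by move=> E; have := index_mem x a; rewrite xa E ltnNge leq_addr.
  - by move=> E; have := index_mem y a; rewrite ya -E ltnNge leq_addr.
  - move=> E; case: (eqVneq x y) => // xy.
    by have := gfun_P tau (negbT xa) (negbT ya); rewrite /gfun xa ya E ltnn;
       rewrite lt_total // => /esym /negbFE; rewrite -(gfun_P tau (negbT ya) (negbT xa)) /gfun xa ya E ltnn.
exists ((perm ginj)^-1)%g.
have posE : forall x, pos ((perm ginj)^-1)%g x = gfun a tau x.
  by move=> x; rewrite /pos invgK permE.
split.
  apply/(topk_inv _ u) => x xa; by rewrite posE /gfun xa.
by move=> x y xa ya; rewrite !posE gfun_P.
Qed.

Definition Dset n (s t : 'S_n) :=
  [set xy : 'I_n * 'I_n | (xy.1 < xy.2) && discordant s t xy.1 xy.2].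

Lemma D_sub n (a : seq 'I_n) rho rho' tau : uniq a -> rho \in topk a -> P a rho' tau ->
  Dset rho' tau \subset Dset rho tau.
Proof.
move=> u rA [r'A H]; apply/subsetP => [[x y]]; rewrite !inE /= => /andP[-> /=].
rewrite !disc_lt => /andP[nxy D]; rewrite nxy /=.
case xa: (x \in a); first by rewrite (topk_lt _ u rA xa) -(topk_lt _ u r'A xa).
case ya: (y \in a).
  by rewrite (lt_total rho nxy) (lt_total rho' nxy) in D *;
     rewrite (topk_lt _ u rA ya) -(topk_lt _ u r'A ya).
by rewrite H ?xa ?ya // eqxx in D.
Qed.

Lemma D_eq_P n (a : seq 'I_n) rho rho0 tau : uniq a -> rho \in topk a -> P a rho0 tau ->
  Dset rho tau \subset Dset rho0 tau -> P a rho tau.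
Proof.
move=> u rA [r0A H] sub; split => // x y xa ya.
case: (eqVneq x y) => [->|nxy]; first by rewrite !ltnn.
have key : forall u' v' : 'I_n, u' != v' -> u' < v' -> u' \notin a -> v' \notin a ->
    (pos rho u' < pos rho v') = (pos tau u' < pos tau v').
  move=> u' v' nuv luv ua va.
  have := subsetP sub (u', v'); rewrite !inE /= luv !disc_lt nuv /= H // eqxx.
  by move/implyP; rewrite implybF negbK => /eqP.
case: (ltngtP x y) => lxy; first by apply: key.
  have nyx : y != x by rewrite eq_sym.
  by rewrite (lt_total rho nxy) (lt_total tau nxy) (key y x nyx lxy ya xa).
by move: nxy; rewrite (val_inj lxy) eqxx.
Qed.

Lemma projP n (a : seq 'I_n) tau : uniq a -> P a (proj (topk a) tau) tau.
Proof.
move=> u; have [r0 Pr0] := exists_P tau u.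
have r0A : r0 \in topk a by case: Pr0.
rewrite /proj; case: pickP => [r /andP[rA /forallP H] | H] /=.
  have := H r0; rewrite r0A /= => le.
  have s1 := D_sub u rA Pr0.
  have : Dset r0 tau == Dset r tau by rewrite eqEcard s1.
  move/eqP => E; apply: (D_eq_P u rA Pr0); by rewrite E.
have := H r0; rewrite r0A /=; move/negbT/negP; case.
apply/forallP => r; apply/implyP => rA.
exact: (subset_leq_card (D_sub u rA Pr0)).
Qed.

Lemma uniq_c n (a b : seq 'I_n) : uniq a -> uniq b -> uniq (a ++ [seq x <- b | x \notin a]).
Proof.
move=> ua ub; rewrite cat_uniq ua filter_uniq // andbT /=.
by apply/hasPn => x; rewrite mem_filter => /andP[].
Qed.

Lemma topkc n (a b : seq 'I_n) rho tau : uniq a -> uniq b -> tau \in topk b ->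
  P a rho tau -> rho \in topk (a ++ [seq x <- b | x \notin a]).
Proof.
move=> ua ub tb [rA H]; have uc := uniq_c ua ub.
set b' := [seq x <- b | x \notin a].
apply/(topk_inv _ uc) => x xc; rewrite -rank.
have lt : forall y, (pos rho y < pos rho x) = (index y (a ++ b') < index x (a ++ b')).
  move=> y; rewrite !index_cat.
  case xa: (x \in a).
    rewrite (topk_lt' _ ua rA xa); case ya: (y \in a) => //=.
    apply/esym/negbTE; rewrite -leqNgt; apply: (leq_trans _ (leq_addr _ _)); by rewrite ltnW // index_mem.
  have xb' : x \in b' by move: xc; rewrite mem_cat xa.
  have xb : x \in b by move: xb'; rewrite mem_filter => /andP[].
  case ya: (y \in a).
    by rewrite (topk_lt _ ua rA ya) xa /= ltn_addr // index_mem.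
  rewrite ltn_add2l H ?xa ?ya // (topk_lt' _ ub tb xb).
  case yb': (y \in b').
    have yb : y \in b by move: yb'; rewrite mem_filter => /andP[].
    by rewrite yb /= index_filter.
  have -> : (y \in b) = false by move: yb'; rewrite mem_filter ya /=.
  apply/esym/negbTE; rewrite -leqNgt.
  by rewrite (memNindex (negbT yb')) ltnW // index_mem.
have -> : #|[set y | pos rho y < pos rho x]| = #|[set y in take (index x (a ++ b')) (a ++ b')]|.
  apply: eq_card => y; rewrite !inE lt in_take_leq ?index_size //.
rewrite cardsE (card_uniqP _); last exact: take_uniq.
by rewrite size_takel // index_size.
Qed.

Lemma topk_cat n (a s : seq 'I_n) sig : uniq (a ++ s) -> sig \in topk (a ++ s) -> sig \in topk a.
Proof.
move=> u sc; have ua : uniq a by move: u; rewrite cat_uniq => /andP[].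
apply/(topk_inv _ ua) => x xa; rewrite ((topk_inv _ u).1 sc) ?mem_cat ?xa //.
by rewrite index_cat xa.
Qed.

Definition fib n (a b : seq 'I_n) rho :=
  [set tau in topk b | proj (topk a) tau == rho].

Lemma fibE n (a b : seq 'I_n) rho tau : uniq a -> rho \in topk a ->
  (tau \in fib a b rho) <-> (tau \in topk b /\ P a rho tau).
Proof.
move=> ua rA; rewrite inE; split.
  by case/andP => -> /eqP <-; split => //; exact: projP _ ua.
case=> -> Pr /=; apply/eqP; exact: (P_uniq ua (projP tau ua) Pr).
Qed.

Lemma fib_le n (a b : seq 'I_n) r r' : uniq a -> uniq b ->
  r \in topk (a ++ [seq x <- b | x \notin a]) ->
  r' \in topk (a ++ [seq x <- b | x \notin a]) ->
  #|fib a b r| <= #|fib a b r'|.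
Proof.
move=> ua ub rc r'c; have uc := uniq_c ua ub.
set c := a ++ [seq x <- b | x \notin a] in rc r'c uc.
have rA : r \in topk a by exact: topk_cat rc.
have r'A : r' \in topk a by exact: topk_cat r'c.
set g := ((r^-1) * r')%g.
have gc : forall x, x \in c -> g x = x.
  move=> x xc; rewrite permM.
  have -> : (r^-1)%g x = (r'^-1)%g x.
    by apply/val_inj; rewrite /= -/(pos r x) -/(pos r' x) ((topk_inv _ uc).1 rc) // ((topk_inv _ uc).1 r'c).
  by rewrite permKV.
have gic : forall x, x \in c -> (g^-1)%g x = x by move=> x xc; rewrite -{1}(gc x xc) permK.
have ga : forall x, x \notin a -> (g^-1)%g x \notin a.
  move=> x xa; apply/contra: xa => H.
  have : (g^-1)%g x \in c by rewrite mem_cat H.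
  by move/gc; rewrite permKV => ->.
have posM : forall (t : 'S_n) x, pos (t * g)%g x = pos t ((g^-1)%g x).
  by move=> t x; rewrite /pos invMg permM.
have rr : r' = (r * g)%g by rewrite /g mulKVg.
rewrite -(card_imset _ (mulIg g)); apply: subset_leq_card.
apply/subsetP => t' /imsetP [t tf ->].
have [tb Pt] := (fibE b t ua rA).1 tf.
apply/(fibE _ _ ua r'A); split.
  apply/(topk_inv _ ub) => x xb; rewrite posM gic; first exact: (topk_inv _ ub).1 tb x xb.
  by rewrite mem_cat mem_filter xb andbT; case: (x \in a).
split => // x y xa ya; rewrite rr !posM; exact: (proj2 Pt) _ _ (ga _ xa) (ga _ ya).
Qed.

Theorem lemma7 (n : nat) (a b : seq 'I_n) (ha : uniq a) (hb : uniq b)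
    (rho : 'S_n) :
  #|[set tau in topk b | proj (topk a) tau == rho]|
    * #|topk (a ++ [seq x <- b | x \notin a])|
  = (if rho \in topk (a ++ [seq x <- b | x \notin a]) then #|topk b| else 0).
Proof.
have uc := uniq_c ha hb.
set c := a ++ [seq x <- b | x \notin a] in uc *.
rewrite -/(fib a b rho).
case: ifP => rc.
  rewrite -[#|topk b|]sum1_card (partition_big (fun t => proj (topk a) t) (fun r => r \in topk c)).
    rewrite (eq_bigr (fun _ => #|fib a b rho|)).
      by rewrite sum_nat_const mulnC.
    move=> j jc; rewrite sum1dep_card -/(fib a b j).
    by apply/eqP; rewrite eqn_leq !fib_le.
  move=> t tb; exact: topkc ha hb tb (projP _ ha).
suff -> : #|fib a b rho| = 0 by [].
apply/eqP; rewrite cards_eq0; apply/eqP/setP => t; rewrite in_set0 /fib inE.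
apply/negbTE/negP => /andP[tb /eqP E].
by move: rc; rewrite -E (topkc ha hb tb (projP _ ha)).
Qed.
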